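(* Let $\Lambda$ be a left-artinian ring, $\mathcal{C}=\mathrm{mod}(\Lambda)$, and let $\alpha,\beta$ be pre-radicals on $\mathcal{C}$. If $\alpha^2=\alpha$ and $\mathcal{T}_\beta\subseteq\mathcal{F}_\alpha$, then $\mathrm{top}(\alpha(M))\in\mathcal{F}_\beta\cap\mathcal{T}_\alpha$ for every $M\in\mathcal{C}$.
   Context: $\mathcal{C}$ is the category of finitely generated left $\Lambda$-modules; $\mathrm{top}(M)=M/\mathrm{rad}(M)$. A pre-radical is an additive subfunctor of the identity functor. $\mathcal{F}_\alpha=\{M:\alpha(M)=0\}$, $\mathcal{T}_\alpha=\{M:\alpha(M)=M\}$. *)

(* Defs.v *)
From HB Require Import structures.
From mathcomp Require Import all_boot all_order all_algebra.
From mathcomp Require Import boolp.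
Set Implicit Arguments. Unset Strict Implicit. Unset Printing Implicit Defensive.
Import GRing.Theory.
Local Open Scope ring_scope.

Definition left_ideal (R : pzRingType) (I : R -> Prop) : Prop :=
  [/\ I 0, (forall x y, I x -> I y -> I (x + y)) & (forall r x, I x -> I (r * x))].

Definition left_artinian (R : pzRingType) : Prop :=
  forall I : nat -> R -> Prop,
    (forall n, left_ideal (I n)) ->
    (forall n x, I n.+1 x -> I n x) ->
    exists N, forall n, (N <= n)%N -> I n = I N.

Section Modules.
Variable R : pzRingType.

Definition fg (V : lmodType R) : Prop :=
  exists n (s : 'I_n -> V), forall v : V,
    exists c : 'I_n -> R, v = \sum_(i < n) c i *: s i.

Section Sub.
Variable V : lmodType R.

Record submod (S : V -> Prop) : Prop := Submod {
  sub0 : S 0;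
  subD : forall x y, S x -> S y -> S (x + y);
  subZ : forall a x, S x -> S (a *: x) }.

Record submodule := Submodule { sm_set :> V -> Prop; sm_ok : submod sm_set }.

Lemma subB (S : submodule) x y : S x -> S y -> S (x - y).
Proof.
move=> Sx Sy; apply: subD (sm_ok S) _ _ Sx _.
by rewrite -scaleN1r; apply: subZ (sm_ok S) _ _ Sy.
Qed.

Definition subm (S : submodule) := {x : V | S x}.

Variable S : submodule.

Lemma subm_inj (u v : subm S) : proj1_sig u = proj1_sig v -> u = v.
Proof.
case: u => u pu; case: v => v pv /= E; subst v.
by rewrite (Prop_irrelevance pu pv).
Qed.

HB.instance Definition _ := gen_eqMixin (subm S).
HB.instance Definition _ := gen_choiceMixin (subm S).

Definition subm0 : subm S := exist _ 0 (sub0 (sm_ok S)).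
Definition submD (u v : subm S) : subm S :=
  exist _ (proj1_sig u + proj1_sig v) (subD (sm_ok S) (proj2_sig u) (proj2_sig v)).
Definition submZ (a : R) (u : subm S) : subm S :=
  exist _ (a *: proj1_sig u) (subZ (sm_ok S) a (proj2_sig u)).
Definition submN (u : subm S) : subm S := submZ (-1) u.

Lemma submDA : associative submD.
Proof. by move=> u v w; apply: subm_inj; rewrite /= addrA. Qed.
Lemma submDC : commutative submD.
Proof. by move=> u v; apply: subm_inj; rewrite /= addrC. Qed.
Lemma subm0D : left_id subm0 submD.
Proof. by move=> u; apply: subm_inj; rewrite /= add0r. Qed.
Lemma submND : left_inverse subm0 submN submD.
Proof. by move=> u; apply: subm_inj; rewrite /= scaleN1r addNr. Qed.

HB.instance Definition _ :=
  GRing.isZmodule.Build (subm S) submDA submDC subm0D submND.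

Lemma submZA a b (u : subm S) : submZ a (submZ b u) = submZ (a * b) u.
Proof. by apply: subm_inj; rewrite /= scalerA. Qed.
Lemma submZ1 : left_id 1 submZ.
Proof. by move=> u; apply: subm_inj; rewrite /= scale1r. Qed.
Lemma submZDr : right_distributive submZ (@submD).
Proof. by move=> a u v; apply: subm_inj; rewrite /= scalerDr. Qed.
Lemma submZDl v : {morph submZ^~ v : a b / a + b >-> submD a b}.
Proof. by move=> a b; apply: subm_inj; rewrite /= scalerDl. Qed.

HB.instance Definition _ :=
  GRing.Zmodule_isLmodule.Build R (subm S) submZA submZ1 submZDr submZDl.

Definition cls (x : V) : V -> Prop := fun y => S (y - x).
Definition quotm := {A : V -> Prop | exists x, A = cls x}.

Lemma quotm_inj (A B : quotm) : proj1_sig A = proj1_sig B -> A = B.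
Proof.
case: A => A pA; case: B => B pB /= E; subst B.
by rewrite (Prop_irrelevance pA pB).
Qed.

HB.instance Definition _ := gen_eqMixin quotm.
HB.instance Definition _ := gen_choiceMixin quotm.

Definition mkq (x : V) : quotm := exist _ (cls x) (ex_intro _ x erefl).
Definition repq (A : quotm) : V := projT1 (cid (proj2_sig A)).

Lemma mkq_eq x y : S (x - y) -> mkq x = mkq y.
Proof.
move=> Sxy; apply: quotm_inj; rewrite /= /cls.
apply: funext => z; apply: propext; split => Sz.
- by have := subD (sm_ok S) Sz Sxy; rewrite addrA subrK.
- by have := subB Sz Sxy; rewrite opprB addrA subrK.
Qed.

Lemma mkq_eqP x y : mkq x = mkq y -> S (x - y).
Proof.
move=> /(congr1 (@proj1_sig _ _)) /= E.
have : cls x x by rewrite /cls subrr; exact: sub0 (sm_ok S).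
by rewrite E.
Qed.

Lemma mkq_rep A : mkq (repq A) = A.
Proof.
apply: quotm_inj; rewrite /repq; case: (cid _) => x /= ->.
by case: A => /= A [y E].
Qed.

Lemma repq_mkq x : S (repq (mkq x) - x).
Proof. by apply: mkq_eqP; rewrite mkq_rep. Qed.

Lemma quotmP (A : quotm) : exists x, A = mkq x.
Proof. by exists (repq A); rewrite mkq_rep. Qed.

Definition q0 : quotm := mkq 0.
Definition qD (A B : quotm) : quotm := mkq (repq A + repq B).
Definition qZ (a : R) (A : quotm) : quotm := mkq (a *: repq A).
Definition qN (A : quotm) : quotm := qZ (-1) A.

Lemma qD_mkq x y : qD (mkq x) (mkq y) = mkq (x + y).
Proof.
apply: mkq_eq.
have -> : repq (mkq x) + repq (mkq y) - (x + y)
        = (repq (mkq x) - x) + (repq (mkq y) - y).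
  by rewrite opprD addrACA.
by apply: subD (sm_ok S) _ _ (repq_mkq x) (repq_mkq y).
Qed.

Lemma qZ_mkq a x : qZ a (mkq x) = mkq (a *: x).
Proof.
by apply: mkq_eq; rewrite -scalerBr; apply: subZ (sm_ok S) _ _ (repq_mkq x).
Qed.

Lemma qDA : associative qD.
Proof.
move=> A B C; case: (quotmP A) => a ->; case: (quotmP B) => b ->.
by case: (quotmP C) => c ->; rewrite !qD_mkq addrA.
Qed.
Lemma qDC : commutative qD.
Proof.
by move=> A B; case: (quotmP A) => a ->; case: (quotmP B) => b ->; rewrite !qD_mkq addrC.
Qed.
Lemma q0D : left_id q0 qD.
Proof. by move=> A; case: (quotmP A) => a ->; rewrite /q0 qD_mkq add0r. Qed.
Lemma qND : left_inverse q0 qN qD.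
Proof.
by move=> A; case: (quotmP A) => a ->; rewrite /qN qZ_mkq qD_mkq scaleN1r addNr.
Qed.

HB.instance Definition _ := GRing.isZmodule.Build quotm qDA qDC q0D qND.

Lemma qZA a b (A : quotm) : qZ a (qZ b A) = qZ (a * b) A.
Proof. by case: (quotmP A) => x ->; rewrite !qZ_mkq scalerA. Qed.
Lemma qZ1 : left_id 1 qZ.
Proof. by move=> A; case: (quotmP A) => x ->; rewrite qZ_mkq scale1r. Qed.
Lemma qZDr : right_distributive qZ qD.
Proof.
move=> a A B; case: (quotmP A) => x ->; case: (quotmP B) => y ->.
by rewrite !(qD_mkq, qZ_mkq) scalerDr.
Qed.
Lemma qZDl A : {morph qZ^~ A : a b / a + b >-> qD a b}.
Proof.
by move=> a b; case: (quotmP A) => x ->; rewrite !(qD_mkq, qZ_mkq) scalerDl.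
Qed.

HB.instance Definition _ := GRing.Zmodule_isLmodule.Build R quotm qZA qZ1 qZDr qZDl.

End Sub.

Section Rad.
Variable V : lmodType R.

Definition maximal_sub (S : submodule V) : Prop :=
  (exists x, ~ S x) /\
  forall T : submodule V, (forall x, S x -> T x) ->
    (forall x, T x) \/ (forall x, T x <-> S x).

(* rad V = intersection of all maximal submodules (= V if there are none) *)
Definition rad_set (x : V) : Prop :=
  forall S : submodule V, maximal_sub S -> S x.

Lemma rad_submod : submod rad_set.
Proof.
split.
- by move=> S _; exact: sub0 (sm_ok S).
- by move=> x y hx hy S mS; apply: subD (sm_ok S) _ _ (hx S mS) (hy S mS).
- by move=> a x hx S mS; apply: subZ (sm_ok S) _ _ (hx S mS).
Qed.

Definition rad : submodule V := Submodule rad_submod.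

Definition top := quotm rad.
End Rad.

(* A pre-radical on C = mod(R): an assignment of a submodule alpha(M) to
   every module, which is a subfunctor of the identity on finitely
   generated modules: f(alpha M) <= alpha N for every R-linear f : M -> N
   between finitely generated modules.  (Additivity is automatic for
   subfunctors of the identity.)  Values on non-f.g. modules are irrelevant. *)
Definition preradical (alpha : forall V : lmodType R, submodule V) : Prop :=
  forall (M N : lmodType R) (f : {linear M -> N}),
    fg M -> fg N -> forall x : M, alpha M x -> alpha N (f x).

End Modules.

(* Main.v *)
Require Import Defs.
From HB Require Import structures.
From mathcomp Require Import all_boot all_order all_algebra.
From mathcomp Require Import boolp.
From mathcomp Require classical_sets.
From mathcomp Require Import zify.
Import GRing.Theory.
Local Open Scope ring_scope.
Set Implicit Arguments. Unset Strict Implicit. Unset Printing Implicit Defensive.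

Definition incl {T} (A B : T -> Prop) := forall x, A x -> B x.

Lemma chain_mono T (C : nat -> T -> Prop) : (forall n, incl (C n) (C n.+1)) ->
  forall m n, (m <= n)%N -> incl (C m) (C n).
Proof.
move=> h m n /subnK <-; elim: (n - m)%N => [|d IH] x //= Cx.
by rewrite addSn; apply: h; apply: IH.
Qed.

Section Ring.
Variable R : pzRingType.

Lemma li0 (I : R -> Prop) : left_ideal I -> I 0.
Proof. by case. Qed.
Lemma liD (I : R -> Prop) x y : left_ideal I -> I x -> I y -> I (x + y).
Proof. by case=> _ h _; apply: h. Qed.
Lemma liM (I : R -> Prop) r x : left_ideal I -> I x -> I (r * x).
Proof. by case=> _ _ h; apply: h. Qed.
Lemma liN (I : R -> Prop) x : left_ideal I -> I x -> I (- x).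
Proof. by move=> h hx; rewrite -mulN1r; apply: liM. Qed.
Lemma liB (I : R -> Prop) x y : left_ideal I -> I x -> I y -> I (x - y).
Proof. by move=> h hx hy; apply: liD => //; apply: liN. Qed.

Lemma li_all : left_ideal (fun _ : R => True).
Proof. by []. Qed.

Hypothesis hR : left_artinian R.

Lemma dcc_min (F : (R -> Prop) -> Prop) :
  (forall I, F I -> left_ideal I) -> (exists I, F I) ->
  exists I, F I /\ forall J, F J -> incl J I -> incl I J.
Proof.
move=> hF [I0 FI0]; apply: contra_notP (fun x => x) => hn.
have step : forall I : {I | F I}, exists J : {J | F J},
    incl (sval J) (sval I) /\ exists x, sval I x /\ ~ sval J x.
  move=> [I FI] /=; apply: contra_notP hn => hJ; exists I; split => // J FJ JI x Ix.
  apply: contra_notP hJ => nJ; exists (exist _ J FJ); split => //; by exists x.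
have [f hf] := choice step.
pose ch n := sval (iter n f (exist _ I0 FI0)).
have [N hN] := @hR ch (fun n => hF _ (svalP _)) (fun n x => (hf _).1 x).
have [x [h1 h2]] := (hf (iter N f (exist _ I0 FI0))).2.
by apply: h2; rewrite -/(ch N.+1) (hN N.+1 (leqnSn N)).
Qed.

Definition maxl (L : R -> Prop) :=
  [/\ left_ideal L, ~ L 1 & forall r, ~ L r -> exists m s, L m /\ 1 = m + s * r].

Lemma exists_maxl (I : R -> Prop) : left_ideal I -> ~ I 1 ->
  exists L, maxl L /\ incl I L.
Proof.
move=> hI nI1.
pose P := fun L : R -> Prop => L = (fun _ => False) \/
  [/\ left_ideal L, incl I L & ~ L 1].
have [A [PA Amax]] : exists A, P A /\ forall B, classical_sets.proper A B -> ~ P B.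
  apply: classical_sets.Zorn_bigcup => F FP Ftot.
  case: (EM (exists X, F X /\ X <> (fun _ => False))) => [[X [FX X0]]|]; last first.
    move=> h; left; apply: funext => x; apply: propext; split => //.
    case=> Y FY Yx; apply: h; exists Y; split => // Y0; by rewrite Y0 in Yx.
  have FX' : [/\ left_ideal X, incl I X & ~ X 1].
    by case: (FP X FX) => // h; case: X0.
  right; split.
  - split.
    + by exists X => //; apply: li0; case: FX'.
    + move=> x y [Y FY Yx] [Z FZ Zy].
      have nY : Y <> (fun _ => False) by move=> h; rewrite h in Yx.
      have nZ : Z <> (fun _ => False) by move=> h; rewrite h in Zy.
      have [Y1 Y2 Y3] : [/\ left_ideal Y, incl I Y & ~ Y 1].
        by case: (FP Y FY) => // h; case: nY.
      have [Z1 Z2 Z3] : [/\ left_ideal Z, incl I Z & ~ Z 1].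
        by case: (FP Z FZ) => // h; case: nZ.
      case: (Ftot Y Z FY FZ) => [YZ|ZY].
        by exists Z => //; apply: liD => //; apply: YZ.
      by exists Y => //; apply: liD => //; apply: ZY.
    + move=> r x [Y FY Yx]; exists Y => //.
      have nY : Y <> (fun _ => False) by move=> h; rewrite h in Yx.
      have [Y1 Y2 Y3] : [/\ left_ideal Y, incl I Y & ~ Y 1].
        by case: (FP Y FY) => // h; case: nY.
      exact: liM.
  - by move=> x Ix; exists X => //; case: FX' => _ h _; apply: h.
  - case=> Y FY Y1.
    have nY : Y <> (fun _ => False) by move=> h; rewrite h in Y1.
    by case: (FP Y FY) => [h|[_ _ h]]; [apply: nY | apply: h].
have [A1 A2 A3] : [/\ left_ideal A, incl I A & ~ A 1].
  case: PA => // A0; exfalso.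
  have PI : P I by rewrite /P; right; split => // x.
  apply: (Amax I _ PI).
  split; first by rewrite A0.
  by rewrite A0 => /(_ 0 (li0 hI)).
exists A; split => //; split => // r nAr.
pose B := fun x => exists m s, A m /\ x = m + s * r.
have hB : left_ideal B.
  split.
  - by exists 0, 0; rewrite mul0r addr0; split => //; apply: li0.
  - move=> x y [m [s [Am ->]]] [m' [s' [Am' ->]]]; exists (m + m'), (s + s').
    by split; [apply: liD | rewrite mulrDl addrACA].
  - move=> t x [m [s [Am ->]]]; exists (t * m), (t * s).
    by split; [apply: liM | rewrite mulrDr mulrA].
case: (EM (B 1)) => [[m [s [Am e]]]|nB1]; first by exists m, s.
exfalso.
have PB : P B.
  rewrite /P; right; split => // x Ix; exists x, 0; rewrite mul0r addr0; split => //; exact: A2.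
apply: (Amax B _ PB); split.
  by move=> x Ax; exists x, 0; rewrite mul0r addr0.
move=> BA; apply: nAr; apply: BA; exists 0, 1; rewrite add0r mul1r; split => //.
exact: li0.
Qed.


Definition inter (k : nat) (M : nat -> R -> Prop) := fun x => forall j, (j < k)%N -> M j x.

Lemma inter_li k M : (forall j, (j < k)%N -> maxl (M j)) -> left_ideal (inter k M).
Proof.
move=> h; split.
- by move=> j jk; case: (h j jk) => hl _ _; apply: li0.
- by move=> x y hx hy j jk; case: (h j jk) => hl _ _; apply: liD => //; [apply: hx | apply: hy].
- by move=> r x hx j jk; case: (h j jk) => hl _ _; apply: liM => //; apply: hx.
Qed.

Lemma K_struct : exists (K : R -> Prop) (k : nat) (M : nat -> R -> Prop) (e : nat -> R),
  [/\ (forall x, K x <-> inter k M x),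
      (forall j, (j < k)%N -> maxl (M j)),
      (forall L, maxl L -> incl K L),
      (forall l j, (l < k)%N -> (j < k)%N -> j <> l -> M j (e l)) &
      (forall l, (l < k)%N -> M l (1 - e l))].
Proof.
pose F := fun K => left_ideal K /\ exists k M, (forall j, (j < k)%N -> maxl (M j)) /\ K = inter k M.
have [K0 [[K0li [k [M [Mmax K0e]]]] K0min]] : exists I, F I /\ forall J, F J -> incl J I -> incl I J.
  apply: dcc_min; first by move=> I [].
  exists (inter 0 (fun _ _ => True)); split; first exact: inter_li.
  by exists 0%N, (fun _ _ => True).
have K0L : forall L, maxl L -> incl K0 L.
  move=> L mL x K0x.
  pose M' := fun j => if j == 0%N then L else M j.-1.
  have hM' : forall j, (j < k.+1)%N -> maxl (M' j).
    by move=> [|j] /= jk; rewrite /M' //=; apply: Mmax.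
  have FM' : F (inter k.+1 M') by split; [exact: inter_li | exists k.+1, M'].
  have sub : incl (inter k.+1 M') K0.
    move=> y hy; rewrite K0e => j jk; exact: (hy j.+1 jk).
  exact: (K0min _ FM' sub x K0x 0%N).
pose P := fun k => exists M, (forall j, (j < k)%N -> maxl (M j)) /\ K0 = inter k M.
have exP : exists k, `[< P k >] by exists k; apply/asboolP; exists M.
case: (ex_minnP exP) => k0 /asboolP [M0 [M0max K0e0]] mink.
have irr : forall l, (l < k0)%N -> exists f, (forall j, (j < k0)%N -> j <> l -> M0 j f) /\ ~ M0 l f.
  move=> l lk; apply: contra_notP (fun x => x) => hn.
  have hf : forall f, (forall j, (j < k0)%N -> j <> l -> M0 j f) -> M0 l f.
    move=> f h; apply: contra_notP hn => nf; by exists f.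
  pose M'' := fun j => if (j < l)%N then M0 j else M0 j.+1.
  have : `[< P k0.-1 >].
    apply/asboolP; exists M''; split.
      move=> j jk; rewrite /M''; case: ifP => _; apply: M0max; lia.
    rewrite K0e0; apply: funext => x; apply: propext; split.
      move=> hx j jk; rewrite /M''; case: ifP => _; apply: hx; lia.
    move=> hx j jk.
    have h' : forall j, (j < k0)%N -> j <> l -> M0 j x.
      move=> j' j'k j'l; case: (ltnP j' l) => hj'.
        by have := hx j' ltac:(lia); rewrite /M'' hj'.
      have := hx j'.-1 ltac:(lia); rewrite /M''.
      have -> : (j'.-1 < l)%N = false by apply/negbTE; lia.
      by have -> : j'.-1.+1 = j' by lia.
    case: (EM (j = l)) => [->|jl]; last exact: h'.
    exact: hf.
  move=> /mink; lia.
have Hch : forall l, exists e, (l < k0)%N ->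
   (forall j, (j < k0)%N -> j <> l -> M0 j e) /\ M0 l (1 - e).
  move=> l; case: (ltnP l k0) => lk; last by exists 0 => /=; lia.
  have [f [f1 f2]] := irr l lk.
  case: (M0max l lk) => li _ hmax.
  have [m [s [Mm em]]] := hmax f f2.
  exists (s * f) => _; split.
    move=> j jk jl; case: (M0max j jk) => lij _ _; apply: liM => //; exact: f1.
  by rewrite em addrK.
have [e he] := choice Hch.
exists K0, k0, M0, e; split.
- by move=> x; rewrite K0e0.
- exact: M0max.
- exact: K0L.
- by move=> l j lk jk jl; apply: (he l lk).1.
- by move=> l lk; apply: (he l lk).2.
Qed.


Section Hop.
Variables (K : R -> Prop) (k : nat) (M : nat -> R -> Prop) (e : nat -> R).
Hypotheses (HK : forall x, K x <-> inter k M x)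
  (HM : forall j, (j < k)%N -> maxl (M j))
  (HKL : forall L, maxl L -> incl K L)
  (He1 : forall l j, (l < k)%N -> (j < k)%N -> j <> l -> M j (e l))
  (He2 : forall l, (l < k)%N -> M l (1 - e l)).

Lemma Mli j : (j < k)%N -> left_ideal (M j).
Proof. by move=> /HM []. Qed.

Lemma Kli : left_ideal K.
Proof.
have h := inter_li HM; split.
- by apply/HK; exact: li0 h.
- by move=> x y /HK hx /HK hy; apply/HK; exact: liD h hx hy.
- by move=> r x /HK hx; apply/HK; exact: liM h hx.
Qed.

Lemma K_right c r : K c -> K (c * r).
Proof.
move=> /HK Kc; apply/HK => j jk.
case: (EM (M j r)) => Mr; first by apply: liM => //; exact: Mli.
have hL : maxl (fun a => M j (a * r)).
  have lj := Mli jk; case: (HM jk) => _ n1 hmax.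
  split => //.
  - split; first by rewrite mul0r; apply: li0.
    + by move=> x y hx hy; rewrite mulrDl; apply: liD.
    + by move=> t x hx; rewrite -mulrA; apply: liM.
  - by rewrite mul1r.
  - move=> a na; have [m [s [Mm em]]] := hmax _ na.
    exists (1 - (r * s) * a), (r * s); split; last by rewrite subrK.
    have -> : (1 - r * s * a) * r = r * m.
      have hm : m = 1 - s * (a * r) by rewrite [1]em addrK.
      by rewrite hm mulrBl mul1r mulrBr mulr1 !mulrA.
    exact: liM.
have := HKL hL; apply; exact/HK.
Qed.

Lemma K_inv c : K c -> exists u, u * (1 - c) = 1.
Proof.
move=> Kc; pose I := fun x => exists u, x = u * (1 - c).
case: (EM (I 1)) => [[u e1]|nI]; first by exists u.
have hI : left_ideal I.
  split.
  - by exists 0; rewrite mul0r.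
  - by move=> x y [u ->] [v ->]; exists (u + v); rewrite mulrDl.
  - by move=> r x [u ->]; exists (r * u); rewrite mulrA.
have [L [mL IL]] := exists_maxl hI nI.
have [Lli nL1 _] := mL.
exfalso; apply: nL1.
have L1c : L (1 - c) by apply: IL; exists 1; rewrite mul1r.
have Lc : L c by apply: (HKL mL).
by have := liD Lli L1c Lc; rewrite subrK.
Qed.

Lemma Me_K l r : (l < k)%N -> M l r -> K (r * e l).
Proof.
move=> lk Mr; apply/HK => j jk.
case: (EM (j = l)) => [->|jl]; last by apply: liM; [exact: Mli | exact: He1].
have -> : r * e l = r - r * (1 - e l) by rewrite mulrBr mulr1 opprB addrC subrK.
by apply: liB; [exact: Mli | | apply: liM; [exact: Mli | exact: He2]].
Qed.

Lemma sum_e : K (1 - \sum_(l < k) e l).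
Proof.
apply/HK => j jk.
rewrite (bigD1 (Ordinal jk)) //= opprD addrA.
apply: liB; [exact: Mli | exact: He2 |].
apply: (big_ind (M j)); [exact: li0 (Mli jk) | by move=> x y; apply: liD (Mli jk) |].
move=> i /eqP ij; apply: He1 => // ij'; apply: ij; apply: val_inj.
by rewrite /= ij'.
Qed.

Inductive span2 (A B : R -> Prop) : R -> Prop :=
| sp0 : span2 A B 0
| spD a b y : A a -> B b -> span2 A B y -> span2 A B (a * b + y).

Lemma span2_li A B : left_ideal A -> left_ideal (span2 A B).
Proof.
move=> hA; split.
- exact: sp0.
- move=> x y; elim=> [|a b z Aa Bb _ IH] hy; first by rewrite add0r.
  by rewrite -addrA; apply: spD => //; apply: IH.
- move=> r x; elim=> [|a b z Aa Bb _ IH]; first by rewrite mulr0; apply: sp0.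
  by rewrite mulrDr mulrA; apply: spD => //; apply: liM.
Qed.

Lemma span2_sub A B : left_ideal A -> (forall a b, A a -> B b -> A (a * b)) ->
  incl (span2 A B) A.
Proof.
move=> hA hAB x; elim=> [|a b z Aa Bb _ IH]; first exact: li0.
by apply: liD => //; apply: hAB.
Qed.

Lemma span2_rK A x c : span2 A K x -> K c -> span2 A K (x * c).
Proof.
move=> sx Kc; elim: sx => [|a b z Aa Bb _ IH]; first by rewrite mul0r; apply: sp0.
rewrite mulrDl -mulrA; apply: spD => //; apply: liM => //; exact: Kli.
Qed.

Fixpoint pw (n : nat) : R -> Prop :=
  if n is n'.+1 then span2 (pw n') K else fun _ => True.

Lemma pw_li n : left_ideal (pw n).
Proof. by elim: n => [|n IH] //=; apply: span2_li. Qed.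

Lemma pw_rK n a c : pw n a -> K c -> pw n (a * c).
Proof. by case: n => [|n] //= h Kc; apply: span2_rK. Qed.

Lemma pw_dec n : incl (pw n.+1) (pw n).
Proof. apply: span2_sub; [exact: pw_li | move=> a b ha hb; exact: pw_rK]. Qed.

Lemma pw_lK n c y : K c -> pw n y -> pw n.+1 (c * y).
Proof.
elim: n y => [|n IH] y Kc /= hy.
  have -> : c * y = 1 * (c * y) + 0 by rewrite mul1r addr0.
  by apply: spD => //; [apply: K_right | apply: sp0].
elim: hy => [|a b z Aa Bb _ IH2]; first by rewrite mulr0; apply: sp0.
by rewrite mulrDr mulrA; apply: spD => //; apply: IH.
Qed.

Lemma span2_nz A B y b : span2 A B y -> y * b <> 0 ->
  exists a c, [/\ A a, B c & a * (c * b) <> 0].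
Proof.
elim=> [|a c z Aa Bc _ IH]; first by rewrite mul0r.
rewrite mulrDl -mulrA => h.
case: (EM (a * (c * b) = 0)) => h1; last by exists a, c.
by apply: IH; move=> h2; apply: h; rewrite h1 h2 addr0.
Qed.

Lemma pw_nil : exists N, forall x, pw N x -> x = 0.
Proof.
have [N hN] := @hR pw (fun n => pw_li n) (fun n => @pw_dec n).
have eN : pw N.+1 = pw N by apply: hN.
exists N => y0 hy0; apply: contra_notP (fun x => x) => ny0.
pose F := fun L => left_ideal L /\ exists y z, [/\ pw N y, L z & y * z <> 0].
have [L0 [[L0li [y [b [py Lb yb]]]] L0min]] :
    exists I, F I /\ forall J, F J -> incl J I -> incl I J.
  apply: dcc_min; first by move=> I [].
  exists (fun _ => True); split => //; exists y0, 1; split => //; by rewrite mulr1.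
pose Kb := fun x => exists c, K c /\ x = c * b.
have Kbli : left_ideal Kb.
  split.
  - by exists 0; rewrite mul0r; split => //; exact: li0 Kli.
  - move=> x z [c [Kc ->]] [c' [Kc' ->]]; exists (c + c'); rewrite mulrDl.
    by split => //; apply: liD Kli _ _.
  - by move=> r x [c [Kc ->]]; exists (r * c); rewrite mulrA; split => //; apply: liM Kli _.
have FKb : F Kb.
  split => //.
  have py' : pw N.+1 y by rewrite eN.
  have [a [c [pa Kc ac]]] := span2_nz py' yb.
  by exists a, (c * b); split => //; exists c.
have sub : incl Kb L0 by move=> x [c [Kc ->]]; apply: liM.
have [c [Kc bcb]] := L0min _ FKb sub b Lb.
have [u hu] := K_inv Kc.
apply: yb.
have -> : b = 0.
  by rewrite -[b]mul1r -hu -mulrA mulrBl mul1r -bcb subrr mulr0.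
by rewrite mulr0.
Qed.


Lemma layer_strict (B A : R -> Prop) (C : nat -> R -> Prop) :
  left_ideal B -> (forall c a, K c -> A a -> B (c * a)) ->
  (forall n, left_ideal (C n)) -> (forall n, incl (C n) (C n.+1)) ->
  (forall n, incl B (C n)) -> (forall n, incl (C n) A) ->
  (forall n, exists x, C n.+1 x /\ ~ C n x) -> False.
Proof.
move=> Bli hKA Cli Cinc BC CA strict.
have hy : forall n, exists yl : R * nat, [/\ C n.+1 yl.1, ~ C n yl.1, (yl.2 < k)%N &
     forall r, M yl.2 r -> B (r * yl.1)].
  move=> n; have [x [x1 x2]] := strict n.
  have [l [lk nl]] : exists l, (l < k)%N /\ ~ C n (e l * x).
    apply: contra_notP x2 => hn.
    have hall : forall l, (l < k)%N -> C n (e l * x).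
      by move=> l lk; apply: contra_notP hn => h; exists l.
    have -> : x = (\sum_(l < k) e l) * x + (1 - \sum_(l < k) e l) * x.
      by rewrite -mulrDl addrC subrK mul1r.
    apply: liD (Cli n) _ _; last by apply: BC; apply: hKA; [exact: sum_e | exact: CA x1].
    rewrite mulr_suml; apply: (big_ind (C n)); [exact: li0 (Cli n) | by move=> ? ?; apply: liD (Cli n) |].
    by move=> i _; apply: hall.
  exists (e l * x, l); split => //=.
  - by apply: liM (Cli _) _.
  - by move=> r Mr; rewrite mulrA; apply: hKA; [exact: Me_K | exact: CA x1].
have [yl hyl] := choice hy.
pose y n := (yl n).1; pose l n := (yl n).2.
pose P n := fun z => exists r b, B b /\ z = r * y n + b.
have Pli : forall n, left_ideal (P n).
  move=> n; split.
  - by exists 0, 0; rewrite mul0r addr0; split => //; exact: li0.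
  - move=> x z [r [b [Bb ->]]] [r' [b' [Bb' ->]]]; exists (r + r'), (b + b').
    by rewrite mulrDl addrACA; split => //; apply: liD.
  - move=> t x [r [b [Bb ->]]]; exists (t * r), (t * b).
    by rewrite mulrDr mulrA; split => //; apply: liM.
have PC : forall n, incl (P n) (C n.+1).
  move=> n z [r [b [Bb ->]]]; apply: liD (Cli _) _ _; last exact: BC.
  by apply: liM (Cli _) _; case: (hyl n).
have Py : forall n, P n (y n) by move=> n; exists 1, 0; rewrite mul1r addr0; split => //; exact: li0.
have P3 : forall n z, P n z -> C n z -> B z.
  move=> n z [r [b [Bb ->]]] Cz; apply: liD => //.
  have [_ ny lk hM] := hyl n.
  case: (EM (M (l n) r)) => Mr; first exact: hM.
  exfalso; apply: ny; case: (HM lk) => _ _ hmax.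
  have [m [s [Mm em]]] := hmax _ Mr.
  have -> : (yl n).1 = m * y n + s * (r * y n + b - b).
    by rewrite addrK mulrA -mulrDl -em mul1r.
  apply: liD (Cli n) _ _; first by apply: BC; exact: hM.
  apply: liM (Cli n) _; apply: (liB (Cli n) Cz); exact: BC.
pose fix E n j := if j is j'.+1 then (fun z => exists u p, [/\ E n j' u, P (n + j')%N p & z = u + p]) else B.
have Eli : forall n j, left_ideal (E n j).
  move=> n; elim=> [|j IH] //=; split.
  - by exists 0, 0; rewrite addr0; split => //; [exact: li0 | exact: li0 (Pli _)].
  - move=> x z [u [p [Eu Pp ->]]] [u' [p' [Eu' Pp' ->]]]; exists (u + u'), (p + p').
    by rewrite addrACA; split => //; [apply: liD | apply: liD (Pli _) _ _].
  - move=> t x [u [p [Eu Pp ->]]]; exists (t * u), (t * p).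
    by rewrite mulrDr; split => //; [apply: liM | apply: liM (Pli _) _].
have EC : forall n j, incl (E n j) (C (n + j)%N).
  move=> n; elim=> [|j IH] z /=; first by move=> Bz; apply: (chain_mono Cinc (leq_addr 0 n)); apply: BC.
  move=> [u [p [Eu Pp ->]]]; apply: liD (Cli _) _ _; last by rewrite ?addnS; apply: PC.
  by rewrite ?addnS; apply: Cinc; apply: IH.
have claim : forall n j z, E n j z -> C n z -> B z.
  move=> n; elim=> [|j IH] z //= [u [p [Eu Pp ->]]] Cz.
  have Cu : C (n + j)%N u := EC n j u Eu.
  have Cz' : C (n + j)%N (u + p) by apply: (chain_mono Cinc (leq_addr j n)).
  have Bp : B p.
    apply: P3 Pp _; have -> : p = (u + p) - u by rewrite addrAC subrr add0r.
    exact: liB (Cli _) Cz' Cu.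
  apply: liD => //; apply: IH => //.
  have -> : u = (u + p) - p by rewrite addrK.
  by apply: (liB (Cli _) Cz); apply: BC.
have Einc : forall n j, incl (E n j) (E n j.+1).
  by move=> n j z Ez; exists z, 0; rewrite addr0; split => //; exact: li0 (Pli _).
have Emono : forall n j j', (j <= j')%N -> incl (E n j) (E n j').
  move=> n j j' /subnK <-; elim: (j' - j)%N => [|d IH] z Ez; first by rewrite add0n.
  by rewrite addSn; apply: Einc; apply: IH.
have Eshift : forall n j, incl (E n.+1 j) (E n j.+1).
  move=> n; elim=> [|j IH] z /=.
    by move=> Bz; exists z, 0; rewrite addr0 addn0; split => //; exact: li0 (Pli _).
  move=> [u [p [Eu Pp ->]]]; exists u, p; split => //; first exact: IH.
  by rewrite addnS -addSn.
pose D n := fun z => exists j, E n j z.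
have Dli : forall n, left_ideal (D n).
  move=> n; split.
  - by exists 0%N; exact: li0.
  - move=> x z [j Ex] [j' Ez]; exists (maxn j j'); apply: liD (Eli _ _) _ _.
      exact: (Emono n j) (leq_maxl j j') _ Ex.
    exact: (Emono n j') (leq_maxr j j') _ Ez.
  - by move=> r x [j Ex]; exists j; apply: liM (Eli _ _) _.
have Ddec : forall n x, D n.+1 x -> D n x.
  by move=> n x [j Ex]; exists j.+1; apply: Eshift.
have [N hN] := @hR D Dli Ddec.
have DN : D N (y N) by exists 1%N; exists 0, (y N); rewrite add0r addn0; split => //; exact: li0.
rewrite -(hN N.+1 (leqnSn N)) in DN.
case: DN => j EN.
have := claim _ _ _ EN (PC _ _ (Py N)) => /(BC N).
by case: (hyl N).
Qed.

Definition accin (A : R -> Prop) := forall C : nat -> R -> Prop,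
  (forall n, left_ideal (C n)) -> (forall n, incl (C n) (C n.+1)) ->
  (forall n, incl (C n) A) -> exists N, forall n, (N <= n)%N -> incl (C n) (C N).

Lemma layer_acc (B A : R -> Prop) (C : nat -> R -> Prop) :
  left_ideal B -> (forall c a, K c -> A a -> B (c * a)) ->
  (forall n, left_ideal (C n)) -> (forall n, incl (C n) (C n.+1)) ->
  (forall n, incl B (C n)) -> (forall n, incl (C n) A) ->
  exists N, forall n, (N <= n)%N -> incl (C n) (C N).
Proof.
move=> Bli hKA Cli Cinc BC CA; apply: contra_notP (fun x => x) => hn.
have hg : forall N, exists n, (N <= n)%N /\ exists x, C n x /\ ~ C N x.
  move=> N; apply: contra_notP hn => h; exists N => n Nn x Cx.
  apply: contra_notP h => nx; exists n; split => //; by exists x.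
have [g hg'] := choice hg.
pose h m := iter m g 0%N.
have hmono : forall m, (h m <= h m.+1)%N by move=> m; rewrite /h iterS; case: (hg' (h m)).
apply: (@layer_strict B A (fun m => C (h m))) => //.
- by move=> n; apply: (chain_mono Cinc (hmono n)).
- move=> n; have [_ [x [x1 x2]]] := hg' (h n); by exists x.
Qed.

Lemma acc_step i : accin (pw i.+1) -> accin (pw i).
Proof.
move=> IH C Cli Cinc CA.
have [N1 h1] := IH (fun n x => C n x /\ pw i.+1 x)
  (fun n => ltac:(split; [split; [exact: li0 (Cli n) | exact: li0 (pw_li _)] |
      move=> x y [? ?] [? ?]; split; [exact: liD (Cli n) _ _ | exact: liD (pw_li _) _ _] |
      move=> r x [? ?]; split; [exact: liM (Cli n) _ | exact: liM (pw_li _) _]]))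
  (fun n x hx => conj (Cinc n x hx.1) hx.2) (fun n x hx => hx.2).
pose C2 n := fun x => exists c p, [/\ C n c, pw i.+1 p & x = c + p].
have C2li : forall n, left_ideal (C2 n).
  move=> n; split.
  - by exists 0, 0; rewrite addr0; split => //; [exact: li0 (Cli n) | exact: li0 (pw_li _)].
  - move=> x y [c [p [Cc Pp ->]]] [c' [p' [Cc' Pp' ->]]]; exists (c + c'), (p + p').
    by rewrite addrACA; split => //; [exact: liD (Cli n) _ _ | exact: liD (pw_li _) _ _].
  - move=> r x [c [p [Cc Pp ->]]]; exists (r * c), (r * p).
    by rewrite mulrDr; split => //; [exact: liM (Cli n) _ | exact: liM (pw_li _) _].
have [N2 h2] := @layer_acc (pw i.+1) (pw i) C2 (pw_li _) (fun c a Kc pa => pw_lK Kc pa) C2li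
  (fun n x => fun '(ex_intro c (ex_intro p (And3 Cc Pp E))) =>
      ex_intro _ c (ex_intro _ p (And3 (Cinc n c Cc) Pp E)))
  (fun n x Px => ex_intro _ 0 (ex_intro _ x (And3 (li0 (Cli n)) Px (esym (add0r x)))))
  (fun n x => fun '(ex_intro c (ex_intro p (And3 Cc Pp E))) =>
      eq_ind_r _ (liD (pw_li i) (CA n c Cc) (pw_dec Pp)) E).
exists (maxn N1 N2) => n hn x Cx.
have hN2 : (N2 <= n)%N by apply: leq_trans hn; apply: leq_maxr.
have hN1 : (N1 <= n)%N by apply: leq_trans hn; apply: leq_maxl.
have : C2 n x by exists x, 0; rewrite addr0; split => //; exact: li0 (pw_li _).
move=> /(h2 n hN2) [c [p [Cc Pp E]]].
have Cc' : C (maxn N1 N2) c := chain_mono Cinc (leq_maxr N1 N2) Cc.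
have Cpn : C n p.
  have -> : p = x - c by rewrite E addrAC subrr add0r.
  apply: (liB (Cli n) Cx); exact: (chain_mono Cinc hN2 Cc).
have [Cp _] := h1 n hN1 p (conj Cpn Pp).
rewrite E; apply: liD (Cli _) Cc' _; exact: (chain_mono Cinc (leq_maxl N1 N2) Cp).
Qed.

Lemma accR : accin (fun _ => True).
Proof.
have [N hN] := pw_nil.
have base : accin (pw N).
  move=> C Cli Cinc CA; exists 0%N => n _ x Cx.
  by rewrite (hN x (CA n x Cx)); apply: li0.
suff : forall j, accin (pw (N - j)) by move=> /(_ N); rewrite subnn.
elim=> [|j IH]; first by rewrite subn0.
case: (ltnP j N) => jN.
  by apply: acc_step; have -> : (N - j.+1).+1 = (N - j)%N by lia.
by have -> : (N - j.+1)%N = (N - j)%N by lia.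
Qed.
End Hop.

Lemma artinian_acc : accin (fun _ : R => True).
Proof.
have [K [k [M [e [h1 h2 h3 h4 h5]]]]] := K_struct.
exact: (accR h1 h2 h3 h4 h5).
Qed.
End Ring.

Section Mod.
Variables (R : pzRingType) (V : lmodType R).

Definition spanF (n : nat) (s : nat -> V) := fun x => exists c : nat -> R, x = \sum_(i < n) c i *: s i.

Lemma spanF_sm n s : submod (spanF n s).
Proof.
split.
- by exists (fun _ => 0); rewrite big1 // => i _; rewrite scale0r.
- move=> x y [c ->] [c' ->]; exists (fun i => c i + c' i).
  by rewrite -big_split; apply: eq_bigr => i _; rewrite scalerDl.
- move=> a x [c ->]; exists (fun i => a * c i).
  by rewrite scaler_sumr; apply: eq_bigr => i _; rewrite scalerA.
Qed.

Lemma submod_and (A B : V -> Prop) : submod A -> submod B -> submod (fun x => A x /\ B x).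
Proof.
move=> hA hB; split.
- by split; [exact: (sub0 hA) | exact: (sub0 hB)].
- by move=> x y [ax bx] [ay b_y]; split; [exact: (subD hA ax ay) | exact: (subD hB bx b_y)].
- by move=> a x [ax bx]; split; [exact: (subZ hA a ax) | exact: (subZ hB a bx)].
Qed.

Lemma spanF0 s x : spanF 0 s x -> x = 0.
Proof. by case=> c ->; rewrite big_ord0. Qed.

Lemma spanFS n s x : spanF n.+1 s x <-> exists y r, spanF n s y /\ x = y + r *: s n.
Proof.
split.
  by case=> c ->; rewrite big_ord_recr /=; exists (\sum_(i < n) c i *: s i), (c n); split => //; exists c.
case=> y [r [[c ->] ->]]; exists (fun i => if i == n then r else c i).
rewrite big_ord_recr /= eqxx; congr (_ + _); apply: eq_bigr => i _.
by rewrite ifN // neq_ltn ltn_ord.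
Qed.

Definition accV (A : V -> Prop) := forall C : nat -> V -> Prop,
  (forall n, submod (C n)) -> (forall n, incl (C n) (C n.+1)) ->
  (forall n, incl (C n) A) -> exists N, forall n, (N <= n)%N -> incl (C n) (C N).

Hypothesis accRR : accin (fun _ : R => True).

Lemma acc_span n s : accV (spanF n s).
Proof.
elim: n => [|n IH] C Csm Cinc CA.
  exists 0%N => m _ x Cx; rewrite (spanF0 (CA m x Cx)); exact: sub0 (Csm 0%N).
have [N1 h1] := IH (fun j x => C j x /\ spanF n s x)
  (fun j => submod_and (Csm j) (spanF_sm n s))
  (fun j x hx => conj (Cinc j x hx.1) hx.2) (fun j x hx => hx.2).
pose I j := fun r => exists y, spanF n s y /\ C j (r *: s n + y).
have Ili : forall j, left_ideal (I j).
  move=> j; split.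
  - exists 0; split; first exact: sub0 (spanF_sm n s).
    by rewrite scale0r addr0; exact: sub0 (Csm j).
  - move=> r r' [y [sy Cy]] [y' [sy' Cy']]; exists (y + y'); split.
      exact: subD (spanF_sm n s) _ _ sy sy'.
    by rewrite scalerDl addrACA; exact: subD (Csm j) _ _ Cy Cy'.
  - move=> t r [y [sy Cy]]; exists (t *: y); split; first exact: subZ (spanF_sm n s) _ _ sy.
    by rewrite -scalerA -scalerDr; exact: subZ (Csm j) _ _ Cy.
have [N2 h2] := accRR Ili (fun j r '(ex_intro y (conj sy Cy)) => ex_intro _ y (conj sy (Cinc j _ Cy)))
  (fun _ _ _ => Logic.I).
exists (maxn N1 N2) => m hm x Cx.
have hN2 : (N2 <= m)%N by apply: leq_trans hm; apply: leq_maxr.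
have hN1 : (N1 <= m)%N by apply: leq_trans hm; apply: leq_maxl.
have [y [r [sy ex]]] := (spanFS n s x).1 (CA m x Cx).
have Ir : I m r by exists y; split => //; rewrite addrC -ex.
have Iinc : forall j, incl (I j) (I j.+1).
  by move=> j r' [y' [sy' Cy']]; exists y'; split => //; apply: Cinc.
have [y' [sy' Cy']] := chain_mono Iinc (leq_maxr N1 N2) (h2 m hN2 r Ir).
have Cm : C m (r *: s n + y') := chain_mono Cinc hm Cy'.
have hd : C m (x - (r *: s n + y')) /\ spanF n s (x - (r *: s n + y')).
  split; first exact: (subB (S := Submodule (Csm m)) Cx Cm).
  have -> : x - (r *: s n + y') = y - y'.
    by rewrite ex opprD addrA addrK.
  apply: (subB (S := Submodule (spanF_sm n s))) => //.
have [CN1 _] := h1 m hN1 _ hd.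
have -> : x = (x - (r *: s n + y')) + (r *: s n + y') by rewrite subrK.
apply: (subD (Csm _) _ Cy'); exact: (chain_mono Cinc (leq_maxl N1 N2) CN1).
Qed.

Lemma fg_span : fg V -> exists n s, forall x, spanF n s x.
Proof.
case=> n [s0 hs]; exists n, (fun i : nat => oapp s0 0 (insub i : option 'I_n)) => x.
have [c0 ->] := hs x; exists (fun i : nat => oapp c0 0 (insub i : option 'I_n)).
by apply: eq_bigr => i _; rewrite valK.
Qed.

Lemma val_sum (S : submodule V) m (F : 'I_m -> subm S) :
  proj1_sig (\sum_(i < m) F i) = \sum_(i < m) proj1_sig (F i).
Proof. by apply: (big_morph (@proj1_sig _ _)). Qed.

Lemma fg_subm (S : submodule V) : fg V -> fg (subm S).
Proof.
move=> fgV; have [n0 [s0 hall]] := fg_span fgV.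
apply: contra_notP (fun x => x) => nfg.
have key : forall m t, (forall i, (i < m)%N -> S (t i)) -> exists x, S x /\ ~ spanF m t x.
  move=> m t ht; apply: contra_notP nfg => hn.
  have hsub : forall x, S x -> spanF m t x.
    move=> x Sx; apply: contra_notP hn => nx; by exists x.
  exists m, (fun i : 'I_m => exist _ (t i) (ht i (ltn_ord i)) : subm S) => v.
  have [c hc] := hsub _ (proj2_sig v).
  exists (fun i => c i); apply: subm_inj; rewrite val_sum hc.
  by apply: eq_bigr.
have hF : forall tm : (nat -> V) * nat, exists x,
    (forall i, (i < tm.2)%N -> S (tm.1 i)) -> S x /\ ~ spanF tm.2 tm.1 x.
  move=> [t m] /=; case: (EM (forall i, (i < m)%N -> S (t i))) => h.
    by have [x hx] := key m t h; exists x.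
  by exists 0.
have [F hF'] := choice hF.
pose fix u m := if m is m'.+1 then (fun i => if i == m' then F (u m', m') else u m' i)
  else (fun _ => 0 : V).
pose t i := u i.+1 i.
have stable : forall m i, (i < m)%N -> u m i = t i.
  elim=> [|m IH] i // /=; rewrite ltnS leq_eqVlt => /orP [/eqP ->|lt].
    by rewrite /t /= eqxx.
  by rewrite ifN ?IH // neq_ltn lt.
have allS : forall m i, (i < m)%N -> S (u m i).
  elim=> [|m IH] i // /=; case: ifP => [/eqP ->|ne] lt.
    by case: (hF' (u m, m) IH).
  by apply: IH; move: lt; rewrite ltnS leq_eqVlt ne.
have spanE : forall m x, spanF m t x <-> spanF m (u m) x.
  move=> m x; split; case=> c ->; exists c; apply: eq_bigr => i _;
    by rewrite stable.
have tS : forall m, ~ spanF m t (t m).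
  move=> m /spanE; rewrite /t /= eqxx.
  by case: (hF' (u m, m) (allS m)).
have Cinc : forall m, incl (spanF m t) (spanF m.+1 t).
  by move=> m x hx; apply/spanFS; exists x, 0; split => //; rewrite scale0r addr0.
have [N hN] := acc_span (n:=n0) (s:=s0) (fun m => spanF_sm m t) Cinc (fun m x _ => hall x).
apply: (tS N); apply: (hN N.+1 (leqnSn N)); apply/spanFS.
exists 0, 1; split; last by rewrite add0r scale1r.
exact: sub0 (spanF_sm N t).
Qed.

End Mod.

Section Lin.
Variables (R : pzRingType) (V : lmodType R) (S : submodule V).

Lemma mkq_lin : GRing.linear_for *:%R (mkq S).
Proof.
move=> a u v.
have -> : (a *: mkq S u + mkq S v) = qD (qZ a (mkq S u)) (mkq S v) by [].
by rewrite qZ_mkq qD_mkq.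
Qed.

HB.instance Definition _ := GRing.isLinear.Build R V (quotm S) *:%R (mkq S) mkq_lin.

Lemma mkqD x y : mkq S (x + y) = mkq S x + mkq S y.
Proof. exact: (esym (qD_mkq S x y)). Qed.
Lemma mkqZ a x : mkq S (a *: x) = a *: mkq S x.
Proof. exact: (esym (qZ_mkq S a x)). Qed.
Lemma mkq0 : mkq S 0 = 0.
Proof. by []. Qed.
Lemma mkq_eq0 x : mkq S x = 0 -> S x.
Proof. by move=> h; have := mkq_eqP (h : mkq S x = mkq S 0); rewrite subr0. Qed.
End Lin.

Section Lin2.
Variables (R : pzRingType) (V : lmodType R) (S1 S2 : submodule V).
Hypothesis H12 : forall x, S1 x -> S2 x.
Definition gmap (h : forall x, S1 x -> S2 x) (u : quotm S1) : quotm S2 := mkq S2 (repq u).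

Lemma gmap_mkq x : gmap H12 (mkq S1 x) = mkq S2 x.
Proof. by apply: mkq_eq; apply: H12; apply: (repq_mkq S1). Qed.

Lemma gmap_lin : GRing.linear_for *:%R (gmap H12).
Proof.
move=> a u v; case: (quotmP u) => x ->; case: (quotmP v) => y ->.
by rewrite -mkqZ -mkqD !gmap_mkq mkqD mkqZ.
Qed.
HB.instance Definition _ := GRing.isLinear.Build R (quotm S1) (quotm S2) *:%R (gmap H12) gmap_lin.
End Lin2.

Lemma fg_surj (R : pzRingType) (U V : lmodType R) (f : {linear U -> V}) :
  fg U -> (forall v, exists u, v = f u) -> fg V.
Proof.
move=> [n [s hs]] hf; exists n, (fun i => f (s i)) => v.
have [u ->] := hf v; have [c ->] := hs u.
exists c; rewrite linear_sum; apply: eq_bigr => i _; by rewrite linearZ.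
Qed.

Lemma fg_sub_ax (R : pzRingType) (hR : left_artinian R) (M : lmodType R)
  (S : submodule M) : fg M -> fg (subm S).
Proof. move=> hM; exact: (@fg_subm R M (artinian_acc hR) S hM). Qed.

Unset Implicit Arguments.
Set Strict Implicit.

Theorem lemma2p5 (R : pzRingType) (hR : left_artinian R)
  (alpha beta : forall V : lmodType R, submodule V)
  (halpha : preradical alpha) (hbeta : preradical beta)
  (hidem : forall M : lmodType R, fg M ->
     forall x : subm (alpha M), alpha (subm (alpha M)) x)
  (hTF : forall M : lmodType R, fg M ->
     (forall x : M, beta M x) -> forall x : M, alpha M x -> x = 0)
  (M : lmodType R) (hM : fg M) :
  (forall t : top (subm (alpha M)), beta (top (subm (alpha M))) t -> t = 0) /\
  (forall t : top (subm (alpha M)), alpha (top (subm (alpha M))) t).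
Proof.
set N := subm (alpha M).
have fgN : fg N := fg_sub_ax hR (alpha M) hM.
have fgT : fg (top N).
  apply: (@fg_surj _ N _ (mkq (Defs.rad N))) => // v.
  by exists (repq v); exact: (esym (mkq_rep v)).
have part2 : forall t : top N, alpha (top N) t.
  move=> t; have -> : t = mkq (Defs.rad N) (repq t) by rewrite mkq_rep.
  exact: (halpha _ _ (mkq (Defs.rad N)) fgN fgT _ (hidem M hM (repq t))).
split=> // t bt; case: (pselect (t = 0)) => // tn0; exfalso.
have nrad : ~ Defs.rad N (repq t).
  move=> h; apply: tn0; have -> : t = mkq (Defs.rad N) (repq t) by rewrite mkq_rep.
  by apply: (mkq_eq (S := Defs.rad N)); rewrite subr0.
have [S [mS nS]] : exists S : submodule N, maximal_sub S /\ ~ S (repq t).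
  apply: contra_notP nrad => h S' mS'; apply: contra_notP h => h'.
  by exists S'.
have H12 : forall x, Defs.rad N x -> S x by move=> x; apply; exact: mS.
pose g := gmap H12.
have fgQ : fg (quotm S).
  apply: (@fg_surj _ N _ (mkq S)) => // v.
  by exists (repq v); exact: (esym (mkq_rep v)).
have allb : forall q : quotm S, beta (quotm S) q.
  move=> q; case: (quotmP q) => m ->.
  pose Tp := fun x : N => exists (s : N) (r : R), S s /\ x = s + r *: repq t.
  have Tok : submod Tp.
    split.
    - by exists 0, 0; split; [exact: sub0 (sm_ok S) | rewrite scale0r addr0].
    - move=> x y [s [r [Ss ->]]] [s' [r' [Ss' ->]]].
      exists (s + s'), (r + r'); split; first exact: subD (sm_ok S) _ _ Ss Ss'.
      by rewrite scalerDl addrACA.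
    - move=> a x [s [r [Ss ->]]]; exists (a *: s), (a * r); split.
        exact: subZ (sm_ok S) _ _ Ss.
      by rewrite scalerDr scalerA.
  have incl : forall x, S x -> Submodule Tok x.
    by move=> x Sx; exists x, 0; split => //; rewrite scale0r addr0.
  have [hall|heq] := mS.2 (Submodule Tok) incl.
  - have [s [r [Ss em]]] := hall m.
    have bt' : beta (top N) (r *: t) := subZ (sm_ok (beta (top N))) r bt.
    have E : g (r *: t) = mkq S m.
      have -> : t = mkq (Defs.rad N) (repq t) by rewrite mkq_rep.
      rewrite -mkqZ /g gmap_mkq; apply: mkq_eq.
      rewrite em opprD addrCA subrr addr0 -sub0r; exact: subB (sub0 (sm_ok S)) Ss.
    by rewrite -E; exact: (hbeta _ _ g fgT fgQ _ bt').
  - exfalso; apply: nS; apply/heq; exists 0, 1; split; first exact: sub0 (sm_ok S).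
    by rewrite add0r scale1r.
have := hTF _ fgQ allb _ (halpha _ _ g fgT fgQ _ (part2 t)).
move=> h; apply: nS; apply: mkq_eq0.
have E2 : g t = mkq S (repq t).
  rewrite /g -{1}(mkq_rep t); exact: gmap_mkq.
by rewrite -E2; exact: h.
Qed.
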